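(* Let $R$ be a ring with identity and $a\in R$. Then $a$ is quasipolar if and only if $a=s+q$ where $s$ is strongly regular, $s\in\mathrm{comm}^2(a)$, $q\in R^{qnil}$, and $sq=qs=0$.
   Context: For $a\in R$, $\mathrm{comm}(a)=\{x\in R\mid xa=ax\}$, $\mathrm{comm}^2(a)=\{x\in R\mid xy=yx\text{ for all }y\in\mathrm{comm}(a)\}$. $U(R)$ is the unit group and $R^{qnil}=\{a\in R\mid 1+ax\in U(R)\text{ for every }x\in\mathrm{comm}(a)\}$. An element $a\in R$ is quasipolar if there is an idempotent $p\in\mathrm{comm}^2(a)$ with $a+p\in U(R)$ and $ap\in R^{qnil}$. An element $s$ is strongly regular if $s=sbs$ for some $b\in R$ with $bs=sb$. *)

(* Defs.v *)
From HB Require Import structures.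
From mathcomp Require Import all_boot all_order all_algebra.
Set Implicit Arguments. Unset Strict Implicit. Unset Printing Implicit Defensive.
Import GRing.Theory.
Local Open Scope ring_scope.

Definition comm (R : unitRingType) (a : R) : R -> Prop := fun x => x * a = a * x.

Definition comm2 (R : unitRingType) (a : R) : R -> Prop :=
  fun x => forall y, comm a y -> x * y = y * x.

Definition qnil (R : unitRingType) (a : R) : Prop :=
  forall x, comm a x -> (1 + a * x) \is a GRing.unit.

Definition quasipolar (R : unitRingType) (a : R) : Prop :=
  exists p : R, p * p = p /\ comm2 a p /\ (a + p) \is a GRing.unit /\ qnil (a * p).

Definition strongly_regular (R : unitRingType) (s : R) : Prop :=
  exists b : R, s = s * b * s /\ b * s = s * b.

(* Main.v *)
Require Import Defs.
From mathcomp Require Import all_boot all_order all_algebra.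
Local Open Scope ring_scope.
Import GRing.Theory.

Theorem corollary2p17 (R : unitRingType) (a : R) :
  quasipolar a <->
  exists s q : R,
    a = s + q /\ strongly_regular s /\ comm2 a s /\ qnil q /\
    s * q = 0 /\ q * s = 0.
Proof.
split.
- move=> [p [pp [p2 [uU qn]]]].
  have pa : p * a = a * p := p2 a erefl.
  exists (a * (1 - p)), (a * p).
  have p1 : (1-p) * (1-p) = 1-p by rewrite mulrBr mulr1 mulrBl mul1r pp subrr subr0.
  have pp0 : p * (1-p) = 0 by rewrite mulrBr mulr1 pp subrr.
  have pp0' : (1-p) * p = 0 by rewrite mulrBl mul1r pp subrr.
  have pu : p * (a+p) = (a+p) * p by rewrite mulrDr mulrDl pa.
  have su : a * (1 - p) = (a+p) * (1-p) by rewrite mulrDl pp0 addr0.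
  have cu : (1-p) * (a+p) = (a+p) * (1-p) by rewrite mulrBl mulrBr mul1r mulr1 pu.
  have cv : (1-p) * (a+p)^-1 = (a+p)^-1 * (1-p) by apply: commrV.
  have bs : ((a+p)^-1 * (1-p)) * (a * (1-p)) = 1-p.
    by rewrite su -mulrA [(1-p) * _]mulrA cu -mulrA mulKr // p1.
  have sb : (a * (1-p)) * ((a+p)^-1 * (1-p)) = 1-p.
    by rewrite su -mulrA [(1-p) * _]mulrA cv -mulrA mulVKr // p1.
  split; first by rewrite mulrBr mulr1 subrK.
  split.
    exists ((a+p)^-1 * (1-p)); split; last by rewrite bs sb.
    by rewrite -mulrA bs -mulrA p1.
  split.
    move=> y hy; have py := p2 y hy.
    by rewrite mulrBr mulr1 mulrBl mulrBr (mulrA y a p) hy -(mulrA a y p) -py mulrA.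
  split; first exact: qn.
  split.
    have cpa : (1-p) * a = a * (1-p) by rewrite mulrBl mul1r pa mulrBr mulr1.
    by rewrite mulrA -(mulrA a (1-p) a) cpa -!mulrA pp0' !mulr0.
  by rewrite mulrA -(mulrA a p a) pa -!mulrA pp0 !mulr0.
- move=> [s [q [-> [[b [sbs bsc]] [s2 [qn [sq qs]]]]]]].
  set g := b * s * b.
  have gs : g * s = s * g by rewrite /g -!mulrA bsc !mulrA bsc.
  have h : forall x, s * (b * (s * x)) = s * x by move=> x; rewrite !mulrA -sbs.
  have sgs : s * g * s = s by rewrite /g -!mulrA h !mulrA -sbs.
  have gsg : g * s * g = g by rewrite /g -!mulrA h h.
  pose e := s * g.
  have ee : e * e = e by rewrite /e mulrA sgs.
  have eg : e * g = g by rewrite /e -gs gsg.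
  have ge : g * e = g by rewrite /e mulrA gsg.
  have se : s * e = s by rewrite /e -gs mulrA sgs.
  have es : e * s = s by rewrite /e sgs.
  have comm_g : forall y, s * y = y * s -> g * y = y * g.
    move=> y sy.
    have ey : e * y = y * e.
      have s1e : s * (1 - e) = 0 by rewrite mulrBr mulr1 se subrr.
      have e1s : (1 - e) * s = 0 by rewrite mulrBl mul1r es subrr.
      have egs : e = g * s by rewrite /e gs.
      have h1 : e * y * (1 - e) = 0.
        by rewrite {1}egs -(mulrA g s y) sy mulrA -(mulrA (g*y) s (1-e)) s1e mulr0.
      have h2 : (1 - e) * y * e = 0.
        have -> : (1-e) * y * e = (1-e) * y * (s * g) by [].
        by rewrite mulrA -(mulrA (1-e) y s) -sy (mulrA (1-e) s y) e1s !mul0r.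
      move: h1 h2; rewrite mulrBr mulr1 mulrBl mul1r mulrBl.
      move=> /subr0_eq h1 /subr0_eq h2.
      exact: (etrans h1 (esym h2)).
    by rewrite -{1}ge -mulrA ey /e mulrA mulrA -(mulrA g y s) -sy mulrA gs -/e ey -mulrA eg.
  have egs : e = g * s by rewrite /e gs.
  have eq0 : e * q = 0 by rewrite egs -mulrA sq mulr0.
  have qe0 : q * e = 0 by rewrite /e mulrA qs mul0r.
  have s1e : s * (1 - e) = 0 by rewrite mulrBr mulr1 se subrr.
  have e1s : (1 - e) * s = 0 by rewrite mulrBl mul1r es subrr.
  have g1e : g * (1 - e) = 0 by rewrite mulrBr mulr1 ge subrr.
  have e1g : (1 - e) * g = 0 by rewrite mulrBl mul1r eg subrr.
  have p1 : (1-e) * (1-e) = 1-e by rewrite mulrBr mulr1 mulrBl mul1r ee subrr subr0.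
  exists (1 - e); split; first exact: p1.
  split.
    move=> y hy; have sy := s2 y hy; have gy := comm_g y sy.
    have ey : e * y = y * e by rewrite /e -mulrA gy !mulrA sy.
    by rewrite mulrBl mulrBr mul1r mulr1 ey.
  split.
    have vu : (s + (1 - e)) \is a GRing.unit.
      apply/unitrP; exists (g + (1 - e)); split.
        by rewrite mulrDl (mulrDr g) (mulrDr (1-e) s) gs g1e e1s p1 add0r addr0 -/e addrC subrK.
      by rewrite mulrDl (mulrDr s) (mulrDr (1-e) g) s1e e1g p1 addr0 add0r addrC subrK.
    have qu : (1 + q) \is a GRing.unit by have := qn 1; rewrite mulr1; apply; rewrite /comm mulr1 mul1r.
    have -> : s + q + (1 - e) = (s + (1 - e)) * (1 + q).
      rewrite mulrDr mulr1 mulrDl sq add0r mulrBl mul1r eq0 subr0.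
      by rewrite addrAC.
    by rewrite unitrMr.
  have -> : (s + q) * (1 - e) = q by rewrite mulrDl s1e add0r mulrBr mulr1 qe0 subr0.
  exact: qn.
Qed.
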